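(* Let $I\subseteq\mathbb{R}$ be an interval equipped with its Borel $\sigma$-algebra and Lebesgue measure $\lambda$, and let $\Theta\subseteq\mathbb{R}$ be an interval. Let $\{p_\theta\}_{\theta\in\Theta}$ be a family of strictly positive probability densities on $I$ with respect to $\lambda$, with $\mathbb{P}_\theta=p_\theta\cdot\lambda$, having strictly monotone likelihood ratio: for all $\theta'<\theta''$ in $\Theta$, the function $x\mapsto p_{\theta''}(x)/p_{\theta'}(x)$ is strictly increasing on $I$. Fix $\theta_1\in\Theta$ such that $\Theta_1=\,]-\infty,\theta_1]\cap\Theta\neq\emptyset$ and $\Theta_0=\,]\theta_1,+\infty[\cap\Theta\neq\emptyset$. Then a measurable decision rule $\phi:I\to\{0,1\}$ is an expert for the choice between $\Theta_1$ and $\Theta_0$ if and only if there exists $t\in\overline{\mathbb{R}}=[-\infty,+\infty]$ such that $\phi=f_t$ $\lambda$-almost everywhere, where $f_t(x)=\mathbf{1}_{]-\infty,t[}(x)$.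
   Context: Given a statistical model $(\Omega,\mathcal{A},(\mathbb{P}_\theta)_{\theta\in\Theta})$ in which all $\mathbb{P}_\theta$ have strictly positive densities with respect to a common measure $\mu$, and a partition $\Theta=\Theta_0\cup\Theta_1$ (disjoint), a measurable decision rule $\phi:(\Omega,\mathcal{A})\to\{0,1\}$ (the value $d$ meaning ''decide $\theta\in\Theta_d$'') is called an expert for the choice between $\Theta_0$ and $\Theta_1$ if for every pair $(\theta_0,\theta_1)\in\Theta_0\times\Theta_1$ and every non-negligible event $C\in\mathcal{A}$ (i.e. $\mu(C)>0$) one has $$\frac{\mathbb{P}_{\theta_1}(C\cap\{\phi=1\})}{\mathbb{P}_{\theta_1}(C)}\;\geq\;\frac{\mathbb{P}_{\theta_0}(C\cap\{\phi=1\})}{\mathbb{P}_{\theta_0}(C)}.$$ Here $\Omega=I$, $\mu=\lambda$, decision $1$ corresponds to $\Theta_1=\,]-\infty,\theta_1]\cap\Theta$ and decision $0$ to $\Theta_0=\,]\theta_1,+\infty[\cap\Theta$. *)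

(* Defs.v *)
From HB Require Import structures.
From mathcomp Require Import all_boot all_order all_algebra.
From mathcomp Require Import all_classical all_reals all_analysis.
Set Implicit Arguments. Unset Strict Implicit. Unset Printing Implicit Defensive.
Import Order.TTheory GRing.Theory Num.Theory.
Local Open Scope classical_set_scope.
Local Open Scope ring_scope.

(* P_theta(A) = \int_A p_theta d lambda, as a real number (all sets used are
   subsets of I, where p_theta is a probability density, so this is finite). *)
Definition Pth {R : realType} (p : R -> R -> R) (th : R) (A : set R) : R :=
  fine (\int[@lebesgue_measure R]_(x in A) (p th x)%:E).

Definition pos_density_family {R : realType} (I Theta : interval R)
    (p : R -> R -> R) : Prop :=
  forall th, th \in Theta ->
    [/\ measurable_fun [set` I] (p th),
        (forall x, x \in I -> 0 < p th x) &
        (\int[@lebesgue_measure R]_(x in [set` I]) (p th x)%:E = 1)%E].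

Definition strict_MLR {R : realType} (I Theta : interval R)
    (p : R -> R -> R) : Prop :=
  forall th' th'', th' \in Theta -> th'' \in Theta -> th' < th'' ->
    forall x y, x \in I -> y \in I -> x < y ->
      p th'' x / p th' x < p th'' y / p th' y.

(* phi : I -> {0,1} (value true = decision 1 = "theta in Theta1") is an expert
   for the choice between Theta1 (decision 1) and Theta0 (decision 0):
   for all theta1 in Theta1, theta0 in Theta0, and every measurable C subset of I
   with lambda(C) > 0,
   P_theta1(C /\ {phi=1}) / P_theta1(C) >= P_theta0(C /\ {phi=1}) / P_theta0(C). *)
Definition expert {R : realType} (I : interval R) (p : R -> R -> R)
    (Theta1 Theta0 : set R) (phi : R -> bool) : Prop :=
  forall t1 t0, Theta1 t1 -> Theta0 t0 ->
    forall C : set R, measurable C -> C `<=` [set` I] ->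
      (0 < @lebesgue_measure R C)%E ->
      Pth p t0 (C `&` [set x | phi x]) / Pth p t0 C
        <= Pth p t1 (C `&` [set x | phi x]) / Pth p t1 C.

Definition f_ind {R : realType} (t : \bar R) (x : R) : bool := (x%:E < t)%E.

(* Main.v *)
Require Import Defs.
From HB Require Import structures.
From mathcomp Require Import all_boot all_order all_algebra.
From mathcomp Require Import all_classical all_reals all_analysis.
From mathcomp Require Import measurable_realfun.
Import Order.TTheory GRing.Theory Num.Theory.
Local Open Scope classical_set_scope.
Local Open Scope ring_scope.

Local Notation mu := lebesgue_measure.
Local Open Scope ereal_scope.


Lemma int_pos {R : realType} (D : set R) (f : R -> R) : measurable D -> measurable_fun D f ->
  (forall x, D x -> (0 < f x)%R) -> (0 < mu D)%E ->
  (0 < \int[mu]_(x in D) (f x)%:E)%E.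
Proof.
move=> mD mf fp muD.
have mfE : measurable_fun D (EFin \o f) by exact/measurable_EFinP.
rewrite lt0e integral_ge0 ?andbT; last by move=> x Dx; rewrite lee_fin ltW ?fp.
apply/negP => /eqP H.
have : \int[mu]_(x in D) `|(f x)%:E| = 0%E.
  by rewrite -H; apply: eq_integral => x /set_mem Dx; rewrite gee0_abs// lee_fin ltW ?fp.
move/(ae_eq_integral_abs mu mD mfE) => [N [mN N0 sub]].
have : D `<=` N.
  move=> x Dx; apply: sub => /= /(_ Dx) /eqP; rewrite eqe => /eqP fx0.
  by move: (fp x Dx); rewrite fx0 ltxx.
move=> DN; have := le_measure mu (mem_set mD) (mem_set mN) DN.
by move: N0 => /= ->; rewrite leNgt muD.
Qed.


Lemma int_lt {R : realType} (D : set R) (f g : R -> R) : measurable D -> measurable_fun D f ->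
  measurable_fun D g -> (forall x, D x -> (0 <= f x)%R) ->
  (forall x, D x -> (f x < g x)%R) ->
  \int[mu]_(x in D) (f x)%:E \is a fin_num -> 0 < mu D ->
  \int[mu]_(x in D) (f x)%:E < \int[mu]_(x in D) (g x)%:E.
Proof.
move=> mD mf mg f0 fg fin muD.
have -> : \int[mu]_(x in D) (g x)%:E =
    \int[mu]_(x in D) ((f x)%:E + (g x - f x)%:E).
  by apply: eq_integral => x _; rewrite -EFinD addrC subrK.
rewrite (ge0_integralD mu mD); first last.
- by apply/measurable_EFinP; exact: measurable_funB.
- by move=> x Dx; rewrite lee_fin subr_ge0 ltW ?fg.
- exact/measurable_EFinP.
- by move=> x Dx; rewrite lee_fin f0.
have hp : 0 < \int[mu]_(x in D) (g x - f x)%:E.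
  apply: int_pos => //; first exact: measurable_funB.
  by move=> x Dx; rewrite subr_gt0 fg.
move: fin hp; set a := \int[mu]_(x in D) (f x)%:E.
set b := \int[mu]_(x in D) (g x - f x)%:E.
by move=> fin hp; rewrite lteDl.
Qed.


Lemma mI {R : realType} (I : interval R) : measurable [set` I].
Proof. exact: measurable_itv. Qed.

Lemma int_p_bounds {R : realType} {I Theta : interval R} {p : R -> R -> R} {th} {A : set R} :
  pos_density_family I Theta p -> th \in Theta -> measurable A -> A `<=` [set` I] ->
  0 <= \int[mu]_(x in A) (p th x)%:E <= 1.
Proof.
move=> hp thT mA AI; have [mp pp i1] := hp th thT.
apply/andP; split.
  by apply: integral_ge0 => x Ax; rewrite lee_fin ltW// pp//; exact: AI.
rewrite -i1; apply: (ge0_subset_integral mu mA (mI I)) => //.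
- exact/measurable_EFinP.
- by move=> x Ix; rewrite lee_fin ltW// pp.
Qed.

Lemma PthE {R : realType} {I Theta : interval R} {p : R -> R -> R} {th} {A : set R} :
  pos_density_family I Theta p -> th \in Theta -> measurable A -> A `<=` [set` I] ->
  (Pth p th A)%:E = \int[mu]_(x in A) (p th x)%:E.
Proof.
move=> hp thT mA AI; have /andP[h0 h1] := int_p_bounds hp thT mA AI.
by rewrite /Pth fineK// ge0_fin_numE// (le_lt_trans h1)// ltey.
Qed.

Lemma Pth_ge0 {R : realType} {I Theta : interval R} {p : R -> R -> R} {th} {A : set R} :
  pos_density_family I Theta p -> th \in Theta -> measurable A -> A `<=` [set` I] ->
  (0 <= Pth p th A)%R.
Proof.
move=> hp thT mA AI; have /andP[h0 h1] := int_p_bounds hp thT mA AI.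
by rewrite -lee_fin (PthE hp).
Qed.

Lemma Pth_gt0 {R : realType} {I Theta : interval R} {p : R -> R -> R} {th} {A : set R} :
  pos_density_family I Theta p -> th \in Theta -> measurable A -> A `<=` [set` I] ->
  0 < mu A -> (0 < Pth p th A)%R.
Proof.
move=> hp thT mA AI muA; have [mp pp i1] := hp th thT.
rewrite -lte_fin (PthE hp)//; apply: int_pos => //.
- exact: measurable_funS mp.
- by move=> x Ax; apply: pp; exact: AI.
Qed.

Lemma Pth_setU {R : realType} {I Theta : interval R} {p : R -> R -> R} {th} {A B : set R} :
  pos_density_family I Theta p -> th \in Theta -> measurable A -> A `<=` [set` I] ->
  measurable B -> B `<=` [set` I] -> [disjoint A & B] ->
  Pth p th (A `|` B) = (Pth p th A + Pth p th B)%R.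
Proof.
move=> hp thT mA AI mB BI dAB; have [mp pp i1] := hp th thT.
have ABI : A `|` B `<=` [set` I] by move=> x [/AI|/BI].
apply/eqP; rewrite -eqe EFinD !(PthE hp)//; last exact: measurableU.
rewrite ge0_integral_setU//.
- apply/measurable_EFinP; apply: measurable_funS mp => //; exact: mI.
- by move=> x /ABI Ix; rewrite lee_fin ltW// pp.
Qed.

Lemma Pth_le_cmp {R : realType} {I Theta : interval R} {p : R -> R -> R} {th0 th1} {A : set R} c :
  pos_density_family I Theta p -> th0 \in Theta -> th1 \in Theta ->
  measurable A -> A `<=` [set` I] -> (0 <= c)%R ->
  (forall x, A x -> p th0 x <= c * p th1 x)%R ->
  (Pth p th0 A <= c * Pth p th1 A)%R.
Proof.
move=> hp t0T t1T mA AI c0 h; have [mp0 pp0 _] := hp th0 t0T.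
have [mp1 pp1 _] := hp th1 t1T.
rewrite -lee_fin EFinM !(PthE hp)// -ge0_integralZl_EFin//; last 2 first.
- by move=> x Ax; rewrite lee_fin ltW// pp1//; exact: AI.
- apply/measurable_EFinP; apply: measurable_funS mp1 => //; exact: mI.
apply: ge0_le_integral => //.
all: try by move=> x Ax; rewrite lee_fin ltW// pp0//; exact: AI.
all: try by apply/measurable_EFinP; apply: measurable_funS mp0 => //; exact: mI.
all: try by apply/measurable_EFinP; apply: measurable_funM; [exact: measurable_cst|
  apply: measurable_funS mp1 => //; exact: mI].
all: try by move=> x Ax; rewrite lee_fin h.
all: try by move=> x Ax; rewrite lee_fin mulr_ge0// ltW// pp1//; exact: AI.
Qed.

Lemma Pth_ge_cmp {R : realType} {I Theta : interval R} {p : R -> R -> R} {th0 th1} {A : set R} c :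
  pos_density_family I Theta p -> th0 \in Theta -> th1 \in Theta ->
  measurable A -> A `<=` [set` I] -> (0 <= c)%R ->
  (forall x, A x -> c * p th1 x <= p th0 x)%R ->
  (c * Pth p th1 A <= Pth p th0 A)%R.
Proof.
move=> hp t0T t1T mA AI c0 h; have [mp0 pp0 _] := hp th0 t0T.
have [mp1 pp1 _] := hp th1 t1T.
rewrite -lee_fin EFinM !(PthE hp)// -ge0_integralZl_EFin//; last 2 first.
- by move=> x Ax; rewrite lee_fin ltW// pp1//; exact: AI.
- apply/measurable_EFinP; apply: measurable_funS mp1 => //; exact: mI.
apply: ge0_le_integral => //.
all: try by move=> x Ax; rewrite lee_fin ltW// pp0//; exact: AI.
all: try by apply/measurable_EFinP; apply: measurable_funS mp0 => //; exact: mI.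
all: try by apply/measurable_EFinP; apply: measurable_funM; [exact: measurable_cst|
  apply: measurable_funS mp1 => //; exact: mI].
all: try by move=> x Ax; rewrite lee_fin h.
all: try by move=> x Ax; rewrite lee_fin mulr_ge0// ltW// pp1//; exact: AI.
Qed.

Lemma Pth_lt_cmp {R : realType} {I Theta : interval R} {p : R -> R -> R} {th0 th1} {A : set R} c :
  pos_density_family I Theta p -> th0 \in Theta -> th1 \in Theta ->
  measurable A -> A `<=` [set` I] -> (0 <= c)%R -> 0 < mu A ->
  (forall x, A x -> p th0 x < c * p th1 x)%R ->
  (Pth p th0 A < c * Pth p th1 A)%R.
Proof.
move=> hp t0T t1T mA AI c0 muA h; have [mp0 pp0 _] := hp th0 t0T.
have [mp1 pp1 _] := hp th1 t1T.
rewrite -lte_fin EFinM !(PthE hp)// -ge0_integralZl_EFin//; last 2 first.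
- by move=> x Ax; rewrite lee_fin ltW// pp1//; exact: AI.
- apply/measurable_EFinP; apply: measurable_funS mp1 => //; exact: mI.
have -> : \int[mu]_(x in A) (c%:E * (p th1 x)%:E) = \int[mu]_(x in A) (c * p th1 x)%:E.
  by apply: eq_integral => x _; rewrite EFinM.
apply: int_lt => //.
- apply: measurable_funS mp0 => //; exact: mI.
- apply: measurable_funM; first exact: measurable_cst.
  apply: measurable_funS mp1 => //; exact: mI.
- by move=> x Ax; rewrite ltW// pp0//; exact: AI.
- by rewrite -(PthE hp).
Qed.


Lemma mlr_lt {R : realType} {I Theta : interval R} {p : R -> R -> R} t1 t0 z s :
  pos_density_family I Theta p -> strict_MLR I Theta p ->
  t1 \in Theta -> t0 \in Theta -> (t1 < t0)%R -> z \in I -> s \in I -> (z < s)%R ->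
  (p t0 z < (p t0 s / p t1 s) * p t1 z)%R.
Proof.
move=> hp hm t1T t0T t10 zI sI zs; have [_ pp1 _] := hp t1 t1T.
by have := hm t1 t0 t1T t0T t10 z s zI sI zs; rewrite ltr_pdivrMr// pp1.
Qed.

Lemma mlr_le {R : realType} {I Theta : interval R} {p : R -> R -> R} t1 t0 z s :
  pos_density_family I Theta p -> strict_MLR I Theta p ->
  t1 \in Theta -> t0 \in Theta -> (t1 < t0)%R -> z \in I -> s \in I -> (s <= z)%R ->
  ((p t0 s / p t1 s) * p t1 z <= p t0 z)%R.
Proof.
move=> hp hm t1T t0T t10 zI sI; have [_ pp1 _] := hp t1 t1T.
rewrite le_eqVlt => /orP[/eqP->|sz]; first by rewrite divfK// gt_eqF// pp1.
have := hm t1 t0 t1T t0T t10 s z sI zI sz; rewrite ltr_pdivlMr ?pp1// => /ltW.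
done.
Qed.

Lemma Pth_set0 {R : realType} (p : R -> R -> R) th : Pth p th set0 = 0%R.
Proof. by rewrite /Pth integral_set0. Qed.

Lemma mphiT {R : realType} (I : interval R) (phi : R -> bool) : measurable_fun [set` I] phi ->
  measurable ([set` I] `&` [set x | phi x]).
Proof.
move=> mphi; have := mphi (mI I) [set true] ltac:(done).
by congr measurable; apply/seteqP; split => x [Ix /= ->].
Qed.

Lemma mphiF {R : realType} (I : interval R) (phi : R -> bool) : measurable_fun [set` I] phi ->
  measurable ([set` I] `&` [set x | ~~ phi x]).
Proof.
move=> mphi; have := mphi (mI I) [set false] ltac:(done).
congr measurable; apply/seteqP; split => x [Ix /=].
  by move=> ->. by move/negbTE.
Qed.

Lemma mlt {R : realType} (t : \bar R) : measurable [set x : R | (x%:E < t)].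
Proof.
case: t => [r| |].
- rewrite (_ : [set x | _] = `]-oo, r[%classic); first exact: measurable_itv.
  by apply/seteqP; split => x /=; rewrite in_itv /= lte_fin.
- rewrite (_ : [set x | _] = setT); first exact: measurableT.
  by apply/seteqP; split => x //= _; rewrite ltey.
- rewrite (_ : [set x | _] = set0); first exact: measurable0.
  by apply/seteqP; split => x //=; rewrite ltNge leNye.
Qed.


Lemma suff_dir {R : realType} (I Theta : interval R) (p : R -> R -> R) (theta1 : R)
  (phi : R -> bool) (t : \bar R) :
  pos_density_family I Theta p -> strict_MLR I Theta p ->
  measurable_fun [set` I] phi ->
  {ae mu, forall x, [set` I] x -> phi x = f_ind t x} ->
  expert I p [set th | th \in Theta /\ (th <= theta1)%R]
             [set th | th \in Theta /\ (theta1 < th)%R] phi.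
Proof.
move=> hp hm mphi [N [mN N0 sub]] t1 t0 [t1T t1le] [t0T t0gt] C mC CI muC.
have t10 : (t1 < t0)%R by apply: le_lt_trans t0gt.
set A := C `&` [set x | f_ind t x].
set B := C `&` [set x | ~~ f_ind t x].
have mA : measurable A by apply: measurableI => //; exact: mlt.
have mB : measurable B.
  apply: measurableI => //; rewrite (_ : [set x | _] = ~` [set x | f_ind t x]).
    by apply: measurableC; exact: mlt.
  by apply/seteqP; split => x /=; case: (f_ind t x).
have AI : A `<=` [set` I] by move=> x [/CI].
have BI : B `<=` [set` I] by move=> x [/CI].
have mS : measurable (C `&` [set x | phi x]).
  rewrite (_ : C `&` _ = C `&` ([set` I] `&` [set x | phi x])).
    by apply: measurableI => //; exact: mphiT.
  by apply/seteqP; split => x [Cx px]; split => //; [split=> //; exact: CI|case: px].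
have SI : C `&` [set x | phi x] `<=` [set` I] by move=> x [/CI].
have eqS th : th \in Theta -> Pth p th (C `&` [set x | phi x]) = Pth p th A.
  move=> thT; have [mp pp _] := hp th thT.
  rewrite /Pth; congr fine.
  rewrite (ge0_negligible_integral mN)//; last 2 first.
  - apply/measurable_EFinP; apply: measurable_funS mp => //; exact: mI.
  - by move=> x /SI Ix; rewrite lee_fin ltW// pp.
  rewrite [RHS](ge0_negligible_integral mN)//; last 2 first.
  - apply/measurable_EFinP; apply: measurable_funS mp => //; exact: mI.
  - by move=> x /AI Ix; rewrite lee_fin ltW// pp.
  congr integral; apply/seteqP; split => x [[Cx /= hx] Nx]; split => //; split => //=.
  - have := CI _ Cx => Ix.
    case: (pselect (phi x = f_ind t x)) => [<-//|h]; exfalso; apply: Nx; apply: sub.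
    by move=> /(_ Ix).
  - have := CI _ Cx => Ix.
    case: (pselect (phi x = f_ind t x)) => [->//|h]; exfalso; apply: Nx; apply: sub.
    by move=> /(_ Ix).
have dAB : [disjoint A & B].
  rewrite disj_set2E; apply/eqP/seteqP; split => x // [[_ h1] [_ h2]].
  by move: h2; rewrite /= h1.
have CAB : C = A `|` B.
  apply/seteqP; split => x; last by case=> -[].
  by move=> Cx; case h : (f_ind t x); [left|right]; split => //=; rewrite h.
have PC th : th \in Theta -> Pth p th C = (Pth p th A + Pth p th B)%R.
  by move=> thT; rewrite {1}CAB (Pth_setU hp).
rewrite !eqS// !PC//.
have a0 := Pth_ge0 hp t0T mA AI; have a1 := Pth_ge0 hp t1T mA AI.
have b0 := Pth_ge0 hp t0T mB BI; have b1 := Pth_ge0 hp t1T mB BI.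
have c0 : (0 < Pth p t0 A + Pth p t0 B)%R by rewrite -PC// (Pth_gt0 hp).
have c1 : (0 < Pth p t1 A + Pth p t1 B)%R by rewrite -PC// (Pth_gt0 hp).
suff key : (Pth p t0 A * Pth p t1 B <= Pth p t1 A * Pth p t0 B)%R.
  rewrite ler_pdivrMr// mulrAC ler_pdivlMr//.
  move: key; set x0 := Pth p t0 A; set x1 := Pth p t1 A; set y0 := Pth p t0 B.
  set y1 := Pth p t1 B => key.
  by rewrite !mulrDr [(x0 * x1)%R]mulrC lerD2l.
have [[y [Cy /negbTE fy]]|nB] := pselect (exists y, B y); last first.
  have -> : B = set0 by apply/seteqP; split => x // Bx; apply: nB; exists x.
  by rewrite !Pth_set0 !mulr0.
have [[x [Cx fx]]|nA] := pselect (exists x, A x); last first.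
  have -> : A = set0 by apply/seteqP; split => x // Ax; apply: nA; exists x.
  by rewrite !Pth_set0 !mul0r.
have Ix := CI _ Cx; have Iy := CI _ Cy.
have [s ts] : exists s, t = s%:E.
  move: fx fy; rewrite /f_ind.
  have [[s ->]|[->|->]] : (exists s, t = s%:E) \/ t = +oo \/ t = -oo.
  - by case: (t) => [s| |]; [left; exists s|right; left|right; right].
  - by exists s.
  - by rewrite ltey.
  - by rewrite ltNge leNye.
move: fx fy; rewrite /f_ind ts !lte_fin => xs /negbT; rewrite -leNgt => sy.
move: xs sy; rewrite /= ?lte_fin ?lee_fin => xs sy.
have sI : s \in I by apply: (interval_is_interval Ix Iy); rewrite (ltW xs).
have [_ pp0 _] := hp t0 t0T; have [_ pp1 _] := hp t1 t1T.
have c0' : (0 <= p t0 s / p t1 s)%R by rewrite divr_ge0// ltW// ?pp0 ?pp1.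
have hA z : A z -> (z < s)%R.
  by case=> _; rewrite /= /f_ind ts lte_fin.
have hB z : B z -> (s <= z)%R.
  by case=> _; rewrite /= /f_ind ts lte_fin -leNgt.
have ha := Pth_le_cmp (p t0 s / p t1 s)%R hp t0T t1T mA AI c0'
  (fun z (Az : A z) => ltW (@mlr_lt _ _ _ _ t1 t0 z s hp hm t1T t0T t10 (AI z Az) sI (hA z Az))).
have hb := Pth_ge_cmp (p t0 s / p t1 s)%R hp t0T t1T mB BI c0'
  (fun z (Bz : B z) => @mlr_le _ _ _ _ t1 t0 z s hp hm t1T t0T t10 (BI z Bz) sI (hB z Bz)).
move: ha hb a0 a1 b0 b1 c0'.
set x0 := Pth p t0 A; set x1 := Pth p t1 A; set y0 := Pth p t0 B.
set y1 := Pth p t1 B; set c := (p t0 s / p t1 s)%R.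
move=> ha hb a0 a1 b0 b1 c0'.
apply: (le_trans (y := (c * x1 * y1)%R)).
  by rewrite ler_wpM2r.
by rewrite -mulrA mulrCA ler_wpM2l.
Qed.


Lemma cross {R : realType} (I Theta : interval R) (p : R -> R -> R) (theta1 : R)
  (phi : R -> bool) t1 t0 s :
  pos_density_family I Theta p -> strict_MLR I Theta p ->
  measurable_fun [set` I] phi ->
  expert I p [set th | th \in Theta /\ (th <= theta1)%R]
             [set th | th \in Theta /\ (theta1 < th)%R] phi ->
  t1 \in Theta -> (t1 <= theta1)%R -> t0 \in Theta -> (theta1 < t0)%R ->
  mu (([set` I] `&` [set x | ~~ phi x]) `&` `]-oo, s[) = 0 \/
  mu (([set` I] `&` [set x | phi x]) `&` `]s, +oo[) = 0.
Proof.
move=> hp hm mphi hexp t1T t1le t0T t0gt.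
have t10 : (t1 < t0)%R by apply: le_lt_trans t0gt.
set A := _ `&` `]-oo, s[; set B := _ `&` `]s, +oo[.
have mA : measurable A by apply: measurableI; [exact: mphiF|exact: measurable_itv].
have mB : measurable B by apply: measurableI; [exact: mphiT|exact: measurable_itv].
have AI : A `<=` [set` I] by move=> x [[]].
have BI : B `<=` [set` I] by move=> x [[]].
have [hA|hA] := pselect (mu A = 0); first by left.
have [hB|hB] := pselect (mu B = 0); first by right.
exfalso.
have muA : 0 < mu A by rewrite lt0e measure_ge0 andbT; apply/eqP.
have muB : 0 < mu B by rewrite lt0e measure_ge0 andbT; apply/eqP.
have [[x Ax]|nA] := pselect (exists x, A x); last first.
  by apply: hA; rewrite (_ : A = set0) ?measure0//; apply/seteqP; split=> z // Az; apply: nA; exists z.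
have [[y By]|nB] := pselect (exists y, B y); last first.
  by apply: hB; rewrite (_ : B = set0) ?measure0//; apply/seteqP; split=> z // Bz; apply: nB; exists z.
have hAs z : A z -> (z < s)%R by case=> _; rewrite /= in_itv.
have hBs z : B z -> (s < z)%R by case=> _; rewrite /= in_itv /= andbT.
have sI : s \in I.
  apply: (interval_is_interval (AI x Ax) (BI y By)).
  by rewrite !ltW// ?hAs ?hBs.
have dAB : [disjoint A & B].
  rewrite disj_set2E; apply/eqP/seteqP; split => z // [[[_ h1] _] [[_ h2] _]].
  by move: h1; rewrite /= h2.
set C := A `|` B.
have mC : measurable C by exact: measurableU.
have CI : C `<=` [set` I] by move=> z [/AI|/BI].
have muC : 0 < mu C.
  apply: (lt_le_trans muA); apply: le_measure; rewrite ?inE //.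
  by move=> z Az; left.
have := hexp t1 t0 (conj t1T t1le) (conj t0T t0gt) C mC CI muC.
have -> : C `&` [set x | phi x] = B.
  apply/seteqP; split => z.
    case=> -[Az|Bz] //= pz; exfalso.
    by case: Az => -[_ /=]; rewrite pz.
  by move=> Bz; split; [right|case: Bz => -[]].
rewrite /C !(Pth_setU hp)//.
have [_ pp0 _] := hp t0 t0T; have [_ pp1 _] := hp t1 t1T.
have c0' : (0 <= p t0 s / p t1 s)%R by rewrite divr_ge0// ltW// ?pp0 ?pp1.
have ha := Pth_lt_cmp (p t0 s / p t1 s)%R hp t0T t1T mA AI c0' muA
  (fun z (Az : A z) => (@mlr_lt _ _ _ _ t1 t0 z s hp hm t1T t0T t10 (AI z Az) sI (hAs z Az))).
have hb := Pth_ge_cmp (p t0 s / p t1 s)%R hp t0T t1T mB BI c0'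
  (fun z (Bz : B z) => @mlr_le _ _ _ _ t1 t0 z s hp hm t1T t0T t10 (BI z Bz) sI (ltW (hBs z Bz))).
have a0 := Pth_gt0 hp t0T mA AI muA; have a1 := Pth_gt0 hp t1T mA AI muA.
have b0 := Pth_gt0 hp t0T mB BI muB; have b1 := Pth_gt0 hp t1T mB BI muB.
move: ha hb a0 a1 b0 b1 c0'.
set x0 := Pth p t0 A; set x1 := Pth p t1 A; set y0 := Pth p t0 B.
set y1 := Pth p t1 B; set c := (p t0 s / p t1 s)%R.
move=> ha hb a0 a1 b0 b1 c0'.
rewrite ler_pdivrMr ?addr_gt0// mulrAC ler_pdivlMr ?addr_gt0//.
rewrite !mulrDr [(y0 * y1)%R]mulrC lerD2r.
apply/negP; rewrite -ltNge.
apply: (lt_le_trans (y := (y1 * (c * x1))%R)).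
  by rewrite ltr_pM2l.
by rewrite mulrCA mulrA ler_pM2r.
Qed.


Lemma rat_between {R : realType} (t : \bar R) (x : R) : t < x%:E ->
  exists q : rat, t < (ratr q)%:E /\ (ratr q < x)%R.
Proof.
case: t => [r| |].
- rewrite lte_fin => /rat_in_itvoo [q]; rewrite in_itv /= => /andP[h1 h2].
  by exists q; rewrite lte_fin.
- by rewrite ltNge leey.
- move=> _; have : (x - 1 < x)%R by rewrite ltrBlDr ltrDl.
  move=> /rat_in_itvoo [q]; rewrite in_itv /= => /andP[h1 h2].
  by exists q; rewrite ltNyr.
Qed.


Lemma nec_dir {R : realType} (I Theta : interval R) (p : R -> R -> R) (theta1 : R)
  (phi : R -> bool) :
  pos_density_family I Theta p -> strict_MLR I Theta p ->
  [set th | th \in Theta /\ (th <= theta1)%R] !=set0 ->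
  [set th | th \in Theta /\ (theta1 < th)%R] !=set0 ->
  measurable_fun [set` I] phi ->
  expert I p [set th | th \in Theta /\ (th <= theta1)%R]
             [set th | th \in Theta /\ (theta1 < th)%R] phi ->
  exists t : \bar R, {ae mu, forall x, [set` I] x -> phi x = f_ind t x}.
Proof.
move=> hp hm [t1 [t1T t1le]] [t0 [t0T t0gt]] mphi hexp.
set Z := [set` I] `&` [set x | ~~ phi x].
set O := [set` I] `&` [set x | phi x].
have mZ : measurable Z by exact: mphiF.
have mO : measurable O by exact: mphiT.
have hc s := @cross _ I Theta p theta1 phi t1 t0 s hp hm mphi hexp t1T t1le t0T t0gt.
set Tset := [set s : R | mu (Z `&` `]-oo, s[) = 0].
have down u s : Tset u -> (s <= u)%R -> Tset s.
  move=> Tu su; apply/eqP; rewrite eq_le measure_ge0 andbT -[X in _ <= X]Tu.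
  apply: le_measure; rewrite ?inE; try (apply: measurableI => //; exact: measurable_itv).
  move=> z [Zz]; rewrite /= !in_itv /= => zs; split => //.
  by rewrite (lt_le_trans zs).
set t := ereal_sup (EFin @` Tset).
exists t.
pose G1 n := match @unpickle rat n with
  | Some q => if pselect (Tset (ratr q)) then Z `&` `]-oo, ratr q[ else set0
  | None => set0 end.
pose G2 n := match @unpickle rat n with
  | Some q => if pselect (mu (O `&` `]ratr q, +oo[) = 0)
              then O `&` `]ratr q, +oo[ else set0
  | None => set0 end.
have nG1 n : mu.-negligible (G1 n).
  rewrite /G1; case: unpickle => [q|]; last exact: negligible_set0.
  case: (pselect (Tset (ratr q))) => [h|_] /=; last exact: negligible_set0.
  by apply/negligibleP => //; apply: measurableI => //; exact: measurable_itv.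
have nG2 n : mu.-negligible (G2 n).
  rewrite /G2; case: unpickle => [q|]; last exact: negligible_set0.
  case: (pselect (mu (O `&` `]ratr q, +oo[) = 0)) => [h|_] /=; last exact: negligible_set0.
  by apply/negligibleP => //; apply: measurableI => //; exact: measurable_itv.
have n3 : mu.-negligible [set fine t].
  by apply/negligibleP; [exact: measurable_set1|exact: lebesgue_measure_set1].
suff sub : ~` [set x | [set` I] x -> phi x = f_ind t x] `<=`
    ((\bigcup_n G1 n) `|` (\bigcup_n G2 n)) `|` [set fine t].
  suff : mu.-negligible (~` [set x | [set` I] x -> phi x = f_ind t x]) by [].
  apply: (@negligibleS _ _ _ mu _ _ sub); apply: negligibleU => //.
  by apply: negligibleU; exact: negligible_bigcup.
move=> x /= /not_implyP [Ix hneq].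
case hpx : (phi x); move: hneq; rewrite hpx /f_ind => hneq.
- have tx : (t <= x%:E) by rewrite leNgt; apply/negP => h; apply: hneq; rewrite h.
  move: tx; rewrite le_eqVlt => /orP[/eqP tx|tx].
    by right; rewrite /= tx.
  have [q [tq qx]] := rat_between _ _ tx.
  have nT : ~ Tset (ratr q).
    move=> Tq; have : ((ratr q)%:E <= t) by apply: ereal_sup_ubound; exists (ratr q).
    by rewrite leNgt tq.
  have hq : mu (O `&` `]ratr q, +oo[) = 0.
    by case: (hc (ratr q)) => [h|h]; [exfalso; exact: nT h|exact: h].
  suff h : G2 (pickle q) x by left; right; exists (pickle q).
  rewrite /G2 (pickleK q).
  case: (pselect (mu (O `&` `]ratr q, +oo[) = 0)) => //= _; split; first by split.
  by rewrite /= in_itv /= andbT.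
- have xt : (x%:E < t).
    by move: hneq; case: (x%:E < t).
  have [_ [u Tu <-] xu] := ereal_sup_gt xt.
  move: xu; rewrite lte_fin => /rat_in_itvoo [q]; rewrite in_itv /= => /andP[xq qu].
  have Tq : Tset (ratr q) by apply: (down u) => //; exact: ltW.
  suff h : G1 (pickle q) x by left; left; exists (pickle q).
  rewrite /G1 (pickleK q).
  case: (pselect (Tset (ratr q))) => //= _; split; first by split => //=; rewrite hpx.
  by rewrite /= in_itv.
Qed.


Local Close Scope ereal_scope.

Theorem proposition3p1 (R : realType) (I Theta : interval R)
    (p : R -> R -> R) (theta1 : R) :
  pos_density_family I Theta p ->
  strict_MLR I Theta p ->
  theta1 \in Theta ->
  [set th | th \in Theta /\ th <= theta1] !=set0 ->
  [set th | th \in Theta /\ theta1 < th] !=set0 ->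
  forall phi : R -> bool, measurable_fun [set` I] phi ->
    expert I p [set th | th \in Theta /\ th <= theta1]
               [set th | th \in Theta /\ theta1 < th] phi
    <-> exists t : \bar R,
          {ae @lebesgue_measure R, forall x, [set` I] x -> phi x = f_ind t x}.
Proof.
move=> hp hm th1T ne1 ne0 phi mphi; split.
- exact: nec_dir.
- by case=> t ht; exact: (@suff_dir R I Theta p theta1 phi t hp hm mphi ht).
Qed.
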